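(* Let $R$ be a nontrivial ring (with unity) and $\Sigma$ an alphabet. Then for every $L\in\mathrm{RevL}(\mathbb{F}_2,\Sigma)$, the characteristic series $\underline{L}$ of $L$ over $R$ belongs to $\mathrm{Rev}(R,\Sigma)$, and $L\in\mathrm{RevL}(R,\Sigma)$.
   Context: A ring is a semiring $(R,+,\cdot,0,1)$ whose additive monoid is an abelian group (not necessarily commutative multiplication); nontrivial means $0\neq1$. $\mathbb{F}_2$ is the two-element field. For a semiring $S$ and finite nonempty alphabet $\Sigma$, a series is a map $r\colon\Sigma^*\to S$ with value $(r,w)$ and support $\mathrm{supp}(r)=\{w\mid(r,w)\neq0\}$; the characteristic series $\underline{L}$ of $L\subseteq\Sigma^*$ over $S$ has coefficient $1$ on $L$ and $0$ elsewhere. A weighted automaton over $S$ and $\Sigma$ is $\mathcal{A}=(Q,\sigma,\iota,\tau)$ with $Q$ finite, $\sigma\colon Q\times\Sigma\times Q\to S$, $\iota,\tau\colon Q\to S$; a run on $w=a_1\cdots a_t$ is $q_0a_1q_1\cdots a_tq_t$ with all $\sigma(q_{k-1},a_k,q_k)\neq0$, of weight $\iota(q_0)\sigma(q_0,a_1,q_1)\cdots\sigma(q_{t-1},a_t,q_t)\tau(q_t)$, and $(\|\mathcal{A}\|,w)$ is the sum of weights of all runs on $w$. $\mathcal{A}$ is reversible if for all $p,p',q,q'\in Q$, $a\in\Sigma$: $\sigma(p,a,q)\neq0\neq\sigma(p,a,q')$ implies $q=q'$, and $\sigma(p,a,q)\neq0\neq\sigma(p',a,q)$ implies $p=p'$.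 $\mathrm{Rev}(S,\Sigma)$ is the set of series realised by reversible weighted automata over $S$ and $\Sigma$, and $\mathrm{RevL}(S,\Sigma)=\{\mathrm{supp}(r)\mid r\in\mathrm{Rev}(S,\Sigma)\}$. *)

(* Defs.v *)
From mathcomp Require Import all_boot all_algebra.
From mathcomp Require Import boolp.
Set Implicit Arguments. Unset Strict Implicit. Unset Printing Implicit Defensive.
Import GRing.Theory.
Local Open Scope ring_scope.

(* Semirings are MathComp [pzSemiRingType]s (0 = 1 allowed); the alphabet is
   a finite type [Sigma] (nonemptiness is a separate hypothesis); words are
   [seq Sigma]; a series is a function [seq Sigma -> S]. *)

Record wautomaton (S : pzSemiRingType) (Sigma : finType) := WAut {
  wa_state : finType;
  wa_trans : wa_state -> Sigma -> wa_state -> S;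
  wa_init  : wa_state -> S;
  wa_fin   : wa_state -> S }.
Arguments wa_state {S Sigma}.
Arguments wa_trans {S Sigma}.
Arguments wa_init {S Sigma}.
Arguments wa_fin {S Sigma}.

Section Auto.
Variables (S : pzSemiRingType) (Sigma : finType) (A : wautomaton S Sigma).

Definition letter (w : seq Sigma) (k : 'I_(size w)) : Sigma := tnth (in_tuple w) k.

Definition is_run (w : seq Sigma) (r : {ffun 'I_(size w).+1 -> wa_state A}) : bool :=
  [forall k : 'I_(size w),
     wa_trans A (r (widen_ord (leqnSn _) k)) (letter k) (r (lift ord0 k)) != 0].

Definition run_weight (w : seq Sigma) (r : {ffun 'I_(size w).+1 -> wa_state A}) : S :=
  wa_init A (r ord0)
  * (\prod_(k < size w)
       wa_trans A (r (widen_ord (leqnSn _) k)) (letter k) (r (lift ord0 k)))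
  * wa_fin A (r ord_max).

Definition behaviour (w : seq Sigma) : S :=
  \sum_(r : {ffun 'I_(size w).+1 -> wa_state A} | is_run r) run_weight r.

Definition reversible : Prop :=
  (forall (p q q' : wa_state A) (a : Sigma),
      wa_trans A p a q != 0 -> wa_trans A p a q' != 0 -> q = q') /\
  (forall (p p' q : wa_state A) (a : Sigma),
      wa_trans A p a q != 0 -> wa_trans A p' a q != 0 -> p = p').
End Auto.

Definition Rev (S : pzSemiRingType) (Sigma : finType) (f : seq Sigma -> S) : Prop :=
  exists A : wautomaton S Sigma, reversible A /\ forall w, behaviour A w = f w.

Definition RevL (S : pzSemiRingType) (Sigma : finType) (L : seq Sigma -> Prop) : Prop :=
  exists f : seq Sigma -> S, Rev f /\ forall w, L w <-> f w != 0.

Definition char_series (S : pzSemiRingType) (Sigma : finType)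
  (L : seq Sigma -> Prop) (w : seq Sigma) : S :=
  if `[< L w >] then 1 else 0.

(* Main.v *)
Require Import Defs.
From mathcomp Require Import all_boot all_algebra.
From mathcomp Require Import boolp.
Set Implicit Arguments. Unset Strict Implicit. Unset Printing Implicit Defensive.
Import GRing.Theory.
Local Open Scope ring_scope.

Section FF.
Variables (Q : finType) (n : nat).
Definition fcons (q : Q) (g : {ffun 'I_n -> Q}) : {ffun 'I_n.+1 -> Q} :=
  [ffun i => if unlift ord0 i is Some j then g j else q].
Definition ftail (f : {ffun 'I_n.+1 -> Q}) : {ffun 'I_n -> Q} :=
  [ffun j => f (lift ord0 j)].
Lemma fcons0 q g : fcons q g ord0 = q.
Proof. by rewrite ffunE unlift_none. Qed.
Lemma fconsS q g j : fcons q g (lift ord0 j) = g j.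
Proof. by rewrite ffunE liftK. Qed.
Lemma sum_ffunS (S : pzSemiRingType) (F : {ffun 'I_n.+1 -> Q} -> S) :
  \sum_r F r = \sum_q \sum_(g : {ffun 'I_n -> Q}) F (fcons q g).
Proof.
rewrite pair_big /= (reindex (fun x : Q * {ffun 'I_n -> Q} => fcons x.1 x.2)) //.
exists (fun f : {ffun 'I_n.+1 -> Q} => (f ord0, ftail f)) => [[q g] _|f _] /=.
  congr (_, _); first by rewrite fcons0.
  by apply/ffunP => j; rewrite ffunE fconsS.
apply/ffunP => i; rewrite ffunE; case: unliftP => [j ->|->] //.
by rewrite ffunE.
Qed.
End FF.

Section General.
Variables (S : pzSemiRingType) (Sigma : finType) (A : wautomaton S Sigma).

Fixpoint go (p : wa_state A) (w : seq Sigma) : S :=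
  match w with
  | [::] => wa_fin A p
  | a :: w' => \sum_q wa_trans A p a q * go q w'
  end.

Definition W (w : seq Sigma) (r : {ffun 'I_(size w).+1 -> wa_state A}) : S :=
  (\prod_(k < size w)
       wa_trans A (r (widen_ord (leqnSn _) k)) (letter k) (r (lift ord0 k)))
  * wa_fin A (r ord_max).

Lemma letterS a w (k : 'I_(size w)) : 
  @letter Sigma (a :: w) (lift ord0 k) = letter k.
Proof. by rewrite /letter !(tnth_nth a). Qed.

Lemma letter0 a w : @letter Sigma (a :: w) ord0 = a.
Proof. by rewrite /letter (tnth_nth a). Qed.

Lemma is_run_cons a w q (g : {ffun 'I_(size w).+1 -> wa_state A}) :
  @is_run S Sigma A (a :: w) (fcons q g) =
  (wa_trans A q a (g ord0) != 0) && is_run g.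
Proof.
apply/forallP/andP => [H|[H1 /forallP H2] k].
  split.
    have := H ord0. 
    have -> : widen_ord (leqnSn _) (ord0 : 'I_(size (a :: w))) = ord0 by apply/val_inj.
    by rewrite fcons0 fconsS letter0.
  apply/forallP => k; have := H (lift ord0 k).
  have -> : widen_ord (leqnSn _) (lift ord0 k : 'I_(size (a :: w))) =
     lift ord0 (widen_ord (leqnSn _) k) by apply/val_inj.
  by rewrite !fconsS letterS.
case: (unliftP ord0 k) => [j ->|->].
  have -> : widen_ord (leqnSn _) (lift ord0 j : 'I_(size (a :: w))) =
     lift ord0 (widen_ord (leqnSn _) j) by apply/val_inj.
  by rewrite !fconsS letterS; apply: H2.
have -> : widen_ord (leqnSn _) (ord0 : 'I_(size (a :: w))) = ord0 by apply/val_inj.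
by rewrite fcons0 fconsS letter0.
Qed.

Lemma W_cons a w q (g : {ffun 'I_(size w).+1 -> wa_state A}) :
  @W (a :: w) (fcons q g) = wa_trans A q a (g ord0) * W g.
Proof.
rewrite /W big_ord_recl -!mulrA; congr (_ * _).
  have -> : widen_ord (leqnSn _) (ord0 : 'I_(size (a :: w))) = ord0 by apply/val_inj.
  by rewrite fcons0 fconsS letter0.
have -> : (ord_max : 'I_(size (a :: w)).+1) = lift ord0 ord_max by apply/val_inj.
rewrite fconsS; congr (_ * _); apply: eq_bigr => k _.
have -> : widen_ord (leqnSn _) (lift ord0 k : 'I_(size (a :: w))) =
     lift ord0 (widen_ord (leqnSn _) k) by apply/val_inj.
by rewrite !fconsS letterS.
Qed.

Lemma runs_go w p :
  \sum_(r : {ffun 'I_(size w).+1 -> wa_state A} | is_run r && (r ord0 == p)) W r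
  = go p w.
Proof.
elim: w p => [|a w IH] p /=.
  rewrite (big_pred1 [ffun => p]); first by rewrite /W big_ord0 mul1r ffunE.
  move=> r /=.
  have -> : @is_run S Sigma A [::] r = true by apply/forallP => -[].
  apply/eqP/eqP => [<-|->]; last by rewrite ffunE.
  by apply/ffunP => i; rewrite ffunE (ord1 i).
rewrite big_mkcond sum_ffunS (bigD1 p) //= [X in _ + X = _]big1 ?addr0 => [|q qp]; last first.
  by apply: big1 => g _; rewrite fcons0 (negbTE qp) andbF.
transitivity (\sum_(g : {ffun 'I_(size w).+1 -> wa_state A} | is_run g) wa_trans A p a (g ord0) * @W w g).
  rewrite [RHS](bigID (fun g : {ffun _ -> _} => wa_trans A p a (g ord0) != 0)) /=.
  rewrite [X in _ = _ + X]big1 ?addr0 => [|g /andP[_]]; last by move/negPn/eqP->; rewrite mul0r.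
  rewrite [RHS]big_mkcond /=; apply: eq_bigr => g _.
  by rewrite is_run_cons fcons0 eqxx andbT W_cons andbC.
rewrite (partition_big (fun g : {ffun 'I_(size w).+1 -> wa_state A} => g ord0) predT) //=.
apply: eq_bigr => q _; rewrite -IH mulr_sumr; apply: eq_bigr => g /andP[_ /eqP->] //.
Qed.

Lemma behaviour_go w : behaviour A w = \sum_p wa_init A p * go p w.
Proof.
rewrite /behaviour (partition_big (fun r : {ffun 'I_(size w).+1 -> wa_state A} => r ord0) predT) //=.
apply: eq_bigr => p _; rewrite -runs_go mulr_sumr; apply: eq_bigr => r /andP[_ /eqP<-].
by rewrite /run_weight /W mulrA.
Qed.
End General.
Lemma F2_01 (x : 'F_2) : x = (x != 0)%:R.
Proof. by case: x => [[|[|m]] Hm] //=; apply/val_inj. Qed.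

Definition cc (R : pzRingType) (k : nat) : R := if k is k'.+1 then (-2)^+k' else 0.

Lemma ccZ (R : pzRingType) k : cc R k = (cc int k)%:~R.
Proof. case: k => [|k] /=; first by rewrite mulr0z. by rewrite rmorphXn /= rmorphN /=. Qed.

Lemma sumcc_int n : \sum_(k < n.+1) cc int k *+ 'C(n, k) = (odd n)%:Z.
Proof.
apply: (@mulfI _ (-2)) => //.
rewrite mulr_sumr.
have -> : (-2) * (odd n)%:Z = (1 + (-2)) ^+ n - 1.
  have -> : (1 + (-2) : int) = -1 by [].
  by rewrite -signr_odd; case: (odd n).
rewrite exprDn.
transitivity (\sum_(i < n.+1) (1 ^+ (n - i) * (-2) ^+ i *+ 'C(n, i) - (i == 0 :> nat)%:R *+ 'C(n, i)) : int).
  apply: eq_bigr => -[[|i] Hi] _ /=.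
    by rewrite mul0rn mulr0 bin0 expr0 expr1n mulr1 subrr.
  by rewrite mul0rn subr0 expr1n mul1r exprS mulrnAr.
rewrite sumrB; congr (_ - _).
rewrite big_ord_recl /= bin0 big1 ?addr0 // => i _.
by rewrite mul0rn.
Qed.

Lemma sumcc (R : pzRingType) n : \sum_(k < n.+1) cc R k *+ 'C(n, k) = (odd n)%:R.
Proof.
transitivity ((\sum_(k < n.+1) cc int k *+ 'C(n, k))%:~R : R).
  rewrite rmorph_sum /=; apply: eq_bigr => k _.
  by rewrite rmorphMn /= -ccZ.
by rewrite sumcc_int.
Qed.

Lemma sumcc_set (R : pzRingType) (Q : finType) (G : {set Q}) :
  \sum_(X : {set Q} | X \subset G) cc R #|X| = (odd #|G|)%:R.
Proof.
rewrite (partition_big (fun X : {set Q} => inord #|X| : 'I_#|G|.+1) predT) //=.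
rewrite -sumcc; apply: eq_bigr => k _.
rewrite (eq_bigl (fun X : {set Q} => X \in [set X : {set Q} | X \subset G & #|X| == k])); last first.
  move=> X; rewrite !inE; case XG: (X \subset G) => //=.
  by rewrite -(inj_eq val_inj) /= inordK // ltnS subset_leq_card.
rewrite (eq_bigr (fun _ => cc R k)); last by move=> X; rewrite inE => /andP[_ /eqP ->].
by rewrite sumr_const cards_draws.
Qed.
Section Spec.
Variables (Sigma : finType) (A : wautomaton 'F_2 Sigma) (HA : reversible A).
Variable (R : nzRingType).
Local Notation Q := (wa_state A).

Definition d a (p : Q) : option Q := [pick q | wa_trans A p a q != 0].

Lemma d_some p a q : (wa_trans A p a q != 0) = (d a p == Some q).
Proof.
rewrite /d; case: pickP => [q' Hq'|H]; last by rewrite H.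
apply/idP/eqP => [Hq|[<-] //]; congr Some; exact: (proj1 HA) Hq' Hq.
Qed.

Lemma d_inj a p p' q : d a p = Some q -> d a p' = Some q -> p = p'.
Proof.
move=> /eqP H /eqP H'; rewrite -d_some in H; rewrite -d_some in H'.
exact: (proj2 HA) H H'.
Qed.

Fixpoint good (p : Q) (w : seq Sigma) : bool :=
  match w with
  | [::] => wa_fin A p != 0
  | a :: w' => if d a p is Some q then good q w' else false
  end.

Lemma goA p w : go p w = (good p w)%:R.
Proof.
elim: w p => [|a w IH] p /=; first exact: F2_01.
case Hd: (d a p) => [q0|].
  rewrite (bigD1 q0) //= big1 ?addr0 => [|q qq0].
    have : wa_trans A p a q0 != 0 by rewrite d_some Hd.
    by rewrite IH => /negPf H; rewrite [wa_trans _ _ _ _]F2_01 H mul1r.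
  have : wa_trans A p a q == 0 by rewrite -[_ == 0]negbK d_some Hd; apply: contra qq0 => /eqP[->].
  by move/eqP->; rewrite mul0r.
rewrite big1 // => q _.
have : wa_trans A p a q == 0 by rewrite -[_ == 0]negbK d_some Hd.
by move/eqP->; rewrite mul0r.
Qed.

Definition img a (X : {set Q}) : {set Q} := [set q | [exists p in X, d a p == Some q]].
Definition dom a (X : {set Q}) : bool := [forall p in X, d a p != None].

Definition transB (X : {set Q}) a (Y : {set Q}) : R :=
  if dom a X && (Y == img a X) then 1 else 0.
Definition iniB (X : {set Q}) : R := if [forall p in X, wa_init A p != 0] then cc R #|X| else 0.
Definition finB (X : {set Q}) : R := if [forall p in X, wa_fin A p != 0] then 1 else 0.

Definition B : wautomaton R Sigma := @WAut R Sigma {set Q} transB iniB finB.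

Lemma img_sub a X X' : dom a X -> dom a X' -> img a X = img a X' -> X \subset X'.
Proof.
move=> /forallP dX _ E; apply/subsetP => p pX.
have := dX p; rewrite pX /=; case Hd: (d a p) => [q|] // _.
have : q \in img a X' by rewrite -E inE; apply/existsP; exists p; rewrite pX Hd /= eqxx.
rewrite inE => /existsP[p' /andP[p'X /eqP Hd']].
by rewrite (d_inj Hd Hd').
Qed.

Lemma revB : reversible B.
Proof.
split=> [X Y Y' a|X X' Y a] /=; rewrite /transB.
  case: ifP => [/andP[_ /eqP E1]|_]; last by rewrite eqxx.
  case: ifP => [/andP[_ /eqP E2]|_]; last by rewrite eqxx.
  by rewrite E1 E2.
case: ifP => [/andP[d1 /eqP E1]|_]; last by rewrite eqxx.
case: ifP => [/andP[d2 /eqP E2]|_]; last by rewrite eqxx.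
move=> _ _; apply/eqP; rewrite eqEsubset.
by rewrite (img_sub d1 d2) ?(img_sub d2 d1) // -E1 -E2.
Qed.

Lemma goB X w : @go R Sigma B X w = if [forall p in X, good p w] then 1 else 0.
Proof.
elim: w X => [|a w IH] X //=.
rewrite /transB; case dX: (dom a X) => /=.
  rewrite (bigD1 (img a X)) //= eqxx big1 ?addr0 => [|Y /negPf ->]; last by rewrite mul0r.
  rewrite mul1r IH; congr (if _ then _ else _).
  apply/forallP/forallP => H p.
    apply/implyP => pX; move/forallP: dX => /(_ p); rewrite pX /=.
    case Hd: (d a p) => [q|] // _.
    by have := H q; rewrite inE => /implyP; apply; apply/existsP; exists p; rewrite pX Hd /= eqxx.
  apply/implyP; rewrite /img inE => /existsP[p' /andP[p'X /eqP Hd]].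
  by have := H p'; rewrite p'X Hd.
rewrite big1 => [|Y _]; last by rewrite mul0r.
case: ifP => // /forallP H; move/negbT: dX; rewrite negb_forall => /existsP[p].
rewrite negb_imply negbK => /andP[pX /eqP Hd].
by have := H p; rewrite pX Hd.
Qed.

Definition Gs w : {set Q} := [set p | (wa_init A p != 0) && good p w].

Lemma behA w : behaviour A w = #|Gs w|%:R.
Proof.
rewrite behaviour_go -sumr_const [RHS]big_mkcond /=; apply: eq_bigr => p _.
rewrite goA inE [wa_init A p]F2_01.
by case: (wa_init A p != 0); case: (good p w); rewrite /= ?mul1r ?mul0r.
Qed.

Lemma behB w : behaviour B w = (odd #|Gs w|)%:R.
Proof.
rewrite behaviour_go -sumcc_set [RHS]big_mkcond /=; apply: eq_bigr => X _.
rewrite goB /iniB.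
have -> : (X \subset Gs w) = [forall p in X, wa_init A p != 0] && [forall p in X, good p w].
  apply/subsetP/andP => [H|[/forallP H1 /forallP H2] p pX].
    by split; apply/forallP => p; apply/implyP => pX; have := H p pX; rewrite inE => /andP[].
  by rewrite inE; have := H1 p; have := H2 p; rewrite pX /= => -> ->.
by case: ifP; case: ifP; rewrite /= ?mulr1 ?mulr0 ?mul0r.
Qed.
End Spec.

Theorem lemma2 (R : nzRingType) (Sigma : finType) (HSigma : (0 < #|Sigma|)%N)
  (L : seq Sigma -> Prop) :
  @RevL 'F_2 Sigma L ->
  @Rev R Sigma (char_series R L) /\ @RevL R Sigma L.
Proof.
move=> [f [[A [HA Hbeh]] HL]].
have key : forall w, behaviour (B A R) w = char_series R L w.
  move=> w; rewrite behB /char_series.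
  have : L w <-> odd #|Gs A w|.
    rewrite HL -Hbeh (behA HA).
    have -> : (#|Gs A w|%:R : 'F_2) = (odd #|Gs A w|)%:R.
      by apply/val_inj; rewrite /= !val_Fp_nat // modn2; case: (odd _).
    by case: (odd _).
  move=> [H1 H2]; case: asboolP => [Lw|nLw]; first by rewrite (H1 Lw).
  by case: (odd _) H2 => // /(_ isT).
have RB : Rev (char_series R L) by exists (B A R); split; [exact: revB|exact: key].
split=> //; exists (char_series R L); split=> // w.
rewrite /char_series; case: asboolP => H; split=> //.
  by move=> _; exact: oner_neq0.
by rewrite eqxx.
Qed.
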